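(* Let $\alpha$ be a set and $\odot:\alpha\times\alpha\to\alpha$. Define on $\mathrm{Maybe}\,\alpha=\{\mathrm{Nothing}\}\cup\{\mathrm{Just}\,x : x\in\alpha\}$ the functions $\mathit{seq}':\mathrm{Maybe}\,\alpha\times\alpha\to\mathrm{Maybe}\,\alpha$ by $\mathit{seq}'(\mathrm{Nothing},y)=\mathrm{Just}\,y$, $\mathit{seq}'(\mathrm{Just}\,x,y)=\mathrm{Just}(x\odot y)$, and $\odot':\mathrm{Maybe}\,\alpha\times\mathrm{Maybe}\,\alpha\to\mathrm{Maybe}\,\alpha$ by $\mathrm{Nothing}\odot' y=y$, $x\odot'\mathrm{Nothing}=x$, $\mathrm{Just}\,x\odot'\mathrm{Just}\,y=\mathrm{Just}(x\odot y)$. Then calls $\mathrm{reduce}(\odot,\mathit{rdd})$ have deterministic outcomes if and only if calls $\mathrm{aggregate}(\mathrm{Nothing},\mathit{seq}',\odot',\mathit{rdd})$ have deterministic outcomes.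
   Context: Lists are finite; $\mathbin{+\!\!+}$ is concatenation. $\mathrm{foldl}(f,b,[\,])=b$, $\mathrm{foldl}(f,b,[x_1,\dots,x_n])=f(\cdots f(f(b,x_1),x_2)\cdots,x_n)$; for a nonempty list, $\mathrm{reducel}(f,[x_1,x_2,\dots,x_n])=\mathrm{foldl}(f,x_1,[x_2,\dots,x_n])$. An RDD is a list of lists. A partitioning is a function $P$ sending each list $L$ to an RDD obtained by splitting $L$ into consecutive pieces $p_1,\dots,p_n$ with $p_1\mathbin{+\!\!+}\cdots\mathbin{+\!\!+}p_n=L$ and then arbitrarily permuting $[p_1,\dots,p_n]$. $\mathrm{aggregate}_{\mathrm{det}}(z,\mathit{seq},\mathit{comb},[q_1,\dots,q_m])=\mathrm{foldl}(\mathit{comb},z,[\mathrm{foldl}(\mathit{seq},z,q_1),\dots,\mathrm{foldl}(\mathit{seq},z,q_m)])$; calls $\mathrm{aggregate}(z,\mathit{seq},\mathit{comb},\mathit{rdd})$ have deterministic outcomes if $\mathrm{aggregate}_{\mathrm{det}}(z,\mathit{seq},\mathit{comb},P(L))=\mathrm{foldl}(\mathit{seq},z,L)$ for all lists $L$ and partitionings $P$ (pieces possibly empty). $\mathrm{reduce}_{\mathrm{det}}(\odot,[q_1,\dots,q_m])=\mathrm{reducel}(\odot,[\mathrm{reducel}(\odot,q_1),\dots,\mathrm{reducel}(\odot,q_m)])$; calls $\mathrm{reduce}(\odot,\mathit{rdd})$ have deterministic outcomes if $\mathrm{reduce}_{\mathrm{det}}(\odot,P(L))=\mathrm{reducel}(\odot,L)$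 for all nonempty lists $L$ over $\alpha$ and all partitionings $P$ all of whose pieces are nonempty. *)

(* Defs.v *)
From Stdlib Require Import List Permutation.
Import ListNotations.
Set Implicit Arguments.

Definition foldl {A B : Type} (f : B -> A -> B) (b : B) (l : list A) : B :=
  fold_left f l b.

(* reducel on a nonempty list; None on the empty list (where it is undefined) *)
Definition reducel {A : Type} (f : A -> A -> A) (l : list A) : option A :=
  match l with
  | [] => None
  | x :: xs => Some (foldl f x xs)
  end.

Fixpoint all_some {A : Type} (l : list (option A)) : option (list A) :=
  match l with
  | [] => Some []
  | None :: _ => None
  | Some x :: r => match all_some r with Some r' => Some (x :: r') | None => None end
  end.

Definition RDD (A : Type) := list (list A).

Definition partitioning {A : Type} (P : list A -> RDD A) : Prop :=
  forall L : list A, exists pieces : list (list A),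
    concat pieces = L /\ Permutation pieces (P L).

Definition aggregate_det {A B : Type} (z : B) (sq : B -> A -> B) (comb : B -> B -> B)
  (rdd : RDD A) : B :=
  foldl comb z (map (foldl sq z) rdd).

Definition reduce_det {A : Type} (op : A -> A -> A) (rdd : RDD A) : option A :=
  match all_some (map (reducel op) rdd) with
  | Some l => reducel op l
  | None => None
  end.

Definition aggregate_deterministic {A B : Type} (z : B) (sq : B -> A -> B)
  (comb : B -> B -> B) : Prop :=
  forall (P : list A -> RDD A) (L : list A), partitioning P ->
    aggregate_det z sq comb (P L) = foldl sq z L.

Definition reduce_deterministic {A : Type} (op : A -> A -> A) : Prop :=
  forall (P : list A -> RDD A) (L : list A), partitioning P ->
    (forall L' : list A, Forall (fun q => q <> []) (P L')) ->
    L <> [] ->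
    reduce_det op (P L) = reducel op L.

Definition seq' {A : Type} (op : A -> A -> A) (m : option A) (y : A) : option A :=
  match m with
  | None => Some y
  | Some x => Some (op x y)
  end.

Definition op' {A : Type} (op : A -> A -> A) (m n : option A) : option A :=
  match m, n with
  | None, y => y
  | x, None => x
  | Some x, Some y => Some (op x y)
  end.

(* Main.v *)
Require Import Defs.
From Stdlib Require Import List Permutation.
Import ListNotations.

Fixpoint catSomes {A : Type} (l : list (option A)) : list A :=
  match l with
  | [] => []
  | None :: r => catSomes r
  | Some x :: r => x :: catSomes r
  end.

Definition ne {A : Type} (q : list A) : bool :=
  match q with [] => false | _ => true end.

Lemma fold_op' {A : Type} (op : A -> A -> A) (ms : list (option A)) :
  forall acc, foldl (op' op) acc ms =
   match acc with None => reducel op (catSomes ms)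
   | Some x => Some (foldl op x (catSomes ms)) end.
Proof.
  unfold foldl; induction ms as [|m ms IH]; intros acc.
  - destruct acc; reflexivity.
  - simpl. rewrite IH. destruct acc, m; simpl; reflexivity.
Qed.

Lemma fold_seq' {A : Type} (op : A -> A -> A) (L : list A) :
  foldl (seq' op) None L = reducel op L.
Proof.
  destruct L as [|x xs]; [reflexivity|].
  unfold foldl; simpl. generalize x; induction xs as [|y ys IH]; intro z;
  simpl; [reflexivity|]. apply IH.
Qed.

Lemma all_some_filter {A : Type} (op : A -> A -> A) (ls : list (list A)) :
  all_some (map (reducel op) (filter ne ls)) = Some (catSomes (map (reducel op) ls)).
Proof.
  induction ls as [|q ls IH]; simpl; [reflexivity|].
  destruct q; simpl; [exact IH|]. rewrite IH. reflexivity.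
Qed.

Lemma filter_id_ne {A : Type} (ls : list (list A)) :
  Forall (fun q => q <> []) ls -> filter ne ls = ls.
Proof.
  induction 1; simpl; [reflexivity|]. destruct x; [congruence|]. simpl; f_equal; assumption.
Qed.

Lemma filter_nil_concat {A : Type} (ls : list (list A)) :
  concat ls = [] -> filter ne ls = [].
Proof.
  induction ls as [|q ls IH]; simpl; [reflexivity|].
  destruct q; simpl; [exact IH|discriminate].
Qed.

Lemma catSomes_filter {A : Type} (op : A -> A -> A) (ls : list (list A)) :
  catSomes (map (reducel op) ls) = catSomes (map (reducel op) (filter ne ls)).
Proof.
  induction ls as [|q ls IH]; simpl; [reflexivity|].
  destruct q; simpl; [exact IH|]. rewrite IH; reflexivity.
Qed.

Lemma perm_filter {B : Type} (f : B -> bool) (l l' : list B) :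
  Permutation l l' -> Permutation (filter f l) (filter f l').
Proof.
  induction 1; simpl.
  - constructor.
  - destruct (f x); auto.
  - destruct (f x), (f y); auto using Permutation_refl; constructor.
  - eapply Permutation_trans; eassumption.
Qed.

Theorem lemma3 (A : Type) (op : A -> A -> A) :
  reduce_deterministic op <->
  aggregate_deterministic (@None A) (seq' op) (op' op).
Proof.
  split.
  - intros H P L HP. unfold aggregate_det.
    rewrite fold_op', (map_ext _ _ (fold_seq' op)), fold_seq'; cbv beta iota.
    set (P' := fun L' => filter ne (P L')).
    assert (HP' : partitioning P').
    { intro L'. destruct (HP L') as [pcs [Hc Hp]].
      exists (filter ne pcs). split.
      - rewrite <- Hc. clear. induction pcs as [|q r IH]; simpl; [reflexivity|].
        destruct q; simpl; [exact IH|]. rewrite IH; reflexivity.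
      - apply perm_filter; exact Hp. }
    assert (Hne : forall L', Forall (fun q => q <> []) (P' L')).
    { intro L'. unfold P'. apply Forall_forall. intros q Hq.
      apply filter_In in Hq. destruct Hq as [_ Hq]. destruct q; discriminate. }
    rewrite catSomes_filter.
    destruct L as [|x xs].
    + destruct (HP []) as [pcs [Hc Hp]].
      apply (perm_filter ne) in Hp. rewrite filter_nil_concat in Hp by exact Hc.
      apply Permutation_nil in Hp. rewrite Hp. reflexivity.
    + specialize (H P' (x :: xs) HP' Hne ltac:(discriminate)).
      unfold reduce_det, P' in H. rewrite all_some_filter in H.
      rewrite <- catSomes_filter. exact H.
  - intros H P L HP Hne HL. specialize (H P L HP).
    unfold aggregate_det in H. rewrite fold_op', (map_ext _ _ (fold_seq' op)), fold_seq' in H; cbv beta iota in H.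
    unfold reduce_det. rewrite <- (@filter_id_ne A (P L) (Hne L)) at 1. rewrite all_some_filter.
    exact H.
Qed.
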